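(* Let $G$ be an arbitrary group and let $S$ be a subgroup of $G$. Then every complement $C$ of $S$ in $G$ (i.e. $SC=G$) contains a minimal complement of $S$ in $G$.
   Context: A nonempty set $W'\subseteq G$ is a complement to $W\subseteq G$ if $WW'=G$ (where $WW'=\{ww':w\in W,w'\in W'\}$); it is a minimal complement if no proper subset of $W'$ is a complement to $W$. *)

(* Defs.v *)
Definition is_group {T : Type} (mul : T -> T -> T) (one : T) (inv : T -> T) : Prop :=
  (forall x y z, mul x (mul y z) = mul (mul x y) z) /\
  (forall x, mul one x = x) /\
  (forall x, mul x one = x) /\
  (forall x, mul (inv x) x = one) /\
  (forall x, mul x (inv x) = one).

Definition is_subgroup {T : Type} (mul : T -> T -> T) (one : T) (inv : T -> T)
  (S : T -> Prop) : Prop :=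
  S one /\ (forall x y, S x -> S y -> S (mul x y)) /\ (forall x, S x -> S (inv x)).

Definition setmul {T : Type} (mul : T -> T -> T) (W W' : T -> Prop) : T -> Prop :=
  fun g => exists w w', W w /\ W' w' /\ g = mul w w'.

Definition subset {T : Type} (A B : T -> Prop) : Prop := forall x, A x -> B x.

Definition is_complement {T : Type} (mul : T -> T -> T) (W W' : T -> Prop) : Prop :=
  (exists x, W' x) /\ (forall g, setmul mul W W' g).

Definition is_minimal_complement {T : Type} (mul : T -> T -> T) (W W' : T -> Prop) : Prop :=
  is_complement mul W W' /\
  (forall W'', subset W'' W' -> (exists x, W' x /\ ~ W'' x) -> ~ is_complement mul W W'').

(* Main.v *)
Require Import Defs.
From Stdlib Require Import ClassicalEpsilon FunctionalExtensionality PropExtensionality.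

Theorem proposition4p1 (T : Type) (mul : T -> T -> T) (one : T) (inv : T -> T)
  (hG : is_group mul one inv) (S : T -> Prop) (hS : is_subgroup mul one inv S)
  (C : T -> Prop) (hC : is_complement mul S C) :
  exists M : T -> Prop, subset M C /\ is_minimal_complement mul S M.
Proof.
  destruct hG as [assoc [lone [rone [linv rinv]]]].
  destruct hS as [S1 [Smul Sinv]].
  destruct hC as [_ hcov].
  pose (rel_eq := fun x y => S (mul x (inv y))).
  assert (uniq : forall a b, mul a b = one -> a = inv b).
  { intros a b H. rewrite <- (rone a), <- (rinv b), assoc, H, lone. reflexivity. }
  assert (refl : forall x, rel_eq x x) by (intro x; unfold rel_eq; rewrite rinv; exact S1).
  assert (sym : forall x y, rel_eq x y -> rel_eq y x).
  { unfold rel_eq; intros x y H.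
    replace (mul y (inv x)) with (inv (mul x (inv y))); [now apply Sinv|].
    symmetry; apply uniq.
    rewrite <- assoc, (assoc (inv x)), linv, lone, rinv; reflexivity. }
  assert (trans : forall x y z, rel_eq x y -> rel_eq y z -> rel_eq x z).
  { unfold rel_eq; intros x y z H1 H2.
    replace (mul x (inv z)) with (mul (mul x (inv y)) (mul y (inv z))); [now apply Smul|].
    rewrite <- assoc, (assoc (inv y)), linv, lone; reflexivity. }
  assert (factor : forall s m, S s -> rel_eq (mul s m) m).
  { intros s m Hs; unfold rel_eq; rewrite <- assoc, rinv, rone; exact Hs. }
  pose (P := fun g c => C c /\ rel_eq g c).
  assert (Pex : forall g, exists c, P g c).
  { intro g. destruct (hcov g) as [s [c [Hs [Hc ->]]]]. exists c; split; auto. }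
  assert (Peq : forall g h, rel_eq g h -> P g = P h).
  { intros g h H; apply functional_extensionality; intro c;
    apply propositional_extensionality; unfold P; split; intros [H1 H2]; split; eauto. }
  assert (inh : inhabited T) by exact (inhabits one).
  pose (r := fun g => epsilon inh (P g)).
  assert (rP : forall g, P g (r g)) by (intro g; apply epsilon_spec, Pex).
  assert (rconst : forall g h, rel_eq g h -> r g = r h).
  { intros g h H; unfold r; rewrite (Peq g h H); reflexivity. }
  assert (rr : forall g, r (r g) = r g).
  { intro g; apply rconst, sym, (proj2 (rP g)). }
  exists (fun c => exists g, c = r g).
  split; [| split; [split|]].
  - intros x [g ->]; exact (proj1 (rP g)).
  - exists (r one), one; reflexivity.
  - intro g. exists (mul g (inv (r g))), (r g). split; [exact (proj2 (rP g))|].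
    split; [exists g; reflexivity|]. rewrite <- assoc, linv, rone; reflexivity.
  - intros W'' Hsub [x [[g Hx] Hn]] [_ Hc].
    destruct (Hc x) as [s [m [Hs [Hm Hxm]]]].
    destruct (Hsub m Hm) as [h Hh].
    apply Hn.
    assert (E : x = m).
    { assert (Hr : rel_eq x m) by (rewrite Hxm; apply factor; exact Hs).
      rewrite Hx, Hh in Hr |- *. rewrite <- (rr g), <- (rr h). apply rconst; exact Hr. }
    rewrite E; exact Hm.
Qed.
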